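(* Let $F\subseteq E(BH_2)$ with $|F|\le 3$ and $\delta(BH_2-F)\ge 2$. Then every edge of $BH_2-F$ lies on a Hamiltonian cycle of $BH_2-F$.
   Context: The balanced hypercube $BH_2$ has vertex set $\{0,1,2,3\}^2$, vertices written $(a_0,a_1)$; the vertex $(a_0,a_1)$ is adjacent exactly to the four vertices $((a_0\pm1)\bmod 4,a_1)$ and $((a_0\pm1)\bmod 4,(a_1+(-1)^{a_0})\bmod 4)$. $BH_2-F$ is the graph on $V(BH_2)$ with edge set $E(BH_2)\setminus F$. *)

(* Defs.v *)
From mathcomp Require Import all_boot.
Set Implicit Arguments. Unset Strict Implicit. Unset Printing Implicit Defensive.

Notation V := ('I_4 * 'I_4)%type.

(* (a0,a1) ~ (b0,b1) iff b0 = a0 +- 1 (mod 4) and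
   (b1 = a1  or  b1 = a1 + (-1)^a0 (mod 4)).  (-1 mod 4 = +3.) *)
Definition bh2 : rel V := fun u v =>
  let a0 := nat_of_ord u.1 in let a1 := nat_of_ord u.2 in
  let b0 := nat_of_ord v.1 in let b1 := nat_of_ord v.2 in
  ((b0 == (a0 + 1) %% 4) || (b0 == (a0 + 3) %% 4)) &&
  ((b1 == a1) || (b1 == (a1 + (if odd a0 then 3 else 1)) %% 4)).

Definition is_edge (e : {set V}) : bool :=
  [exists u, exists v, bh2 u v && (e == [set u; v])].

Definition adjF (F : {set {set V}}) : rel V :=
  fun u v => bh2 u v && ([set u; v] \notin F).

Definition min_deg_ge (r : rel V) (k : nat) : Prop :=
  forall v : V, k <= #|[set w | r v w]|.

Definition ham_cycle (r : rel V) (s : seq V) : Prop :=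
  [/\ uniq s, size s = #|{: V}| & cycle r s].

(* Main.v *)
Require Import Defs.
From mathcomp Require Import all_boot.
Set Implicit Arguments. Unset Strict Implicit. Unset Printing Implicit Defensive.

Definition enc (x : V) : nat := 4 * x.1 + x.2.
Definition ekey (u v : V) := minn (enc u) (enc v) * 16 + maxn (enc u) (enc v).
Definition EK : seq nat := [:: 4; 5; 12; 13; 21; 22; 29; 30; 38; 39; 46; 47; 52; 55; 60; 63; 72; 75; 88; 89; 105; 106; 122; 123; 140; 141; 157; 158; 174; 175; 188; 191].
Definition cycN : seq (seq nat) := [:: [:: 0; 4; 3; 7; 2; 6; 1; 5; 8; 12; 11; 15; 10; 14; 9; 13];
  [:: 0; 5; 9; 6; 10; 7; 11; 4; 8; 13; 1; 14; 2; 15; 3; 12];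
  [:: 0; 4; 3; 7; 2; 14; 1; 13; 8; 5; 9; 6; 10; 15; 11; 12];
  [:: 0; 5; 1; 6; 2; 15; 3; 12; 8; 4; 11; 7; 10; 14; 9; 13];
  [:: 0; 4; 3; 12; 8; 5; 1; 14; 2; 15; 11; 7; 10; 6; 9; 13];
  [:: 0; 5; 9; 14; 10; 15; 3; 7; 2; 6; 1; 13; 8; 4; 11; 12];
  [:: 0; 4; 11; 7; 2; 6; 9; 5; 8; 12; 3; 15; 10; 14; 1; 13];
  [:: 0; 5; 1; 6; 10; 7; 3; 4; 8; 13; 9; 14; 2; 15; 11; 12];
  [:: 0; 4; 11; 7; 2; 14; 9; 13; 8; 5; 1; 6; 10; 15; 3; 12];
  [:: 0; 5; 9; 6; 2; 15; 11; 12; 8; 4; 3; 7; 10; 14; 1; 13];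
  [:: 0; 4; 11; 12; 8; 5; 9; 14; 2; 15; 3; 7; 10; 6; 1; 13];
  [:: 0; 5; 1; 14; 10; 15; 11; 7; 2; 6; 9; 13; 8; 4; 3; 12];
  [:: 0; 4; 3; 7; 11; 15; 2; 6; 10; 14; 9; 5; 1; 13; 8; 12];
  [:: 0; 5; 8; 4; 11; 12; 3; 15; 10; 7; 2; 14; 1; 6; 9; 13];
  [:: 0; 4; 3; 12; 11; 7; 10; 15; 2; 6; 1; 14; 9; 5; 8; 13];
  [:: 0; 4; 8; 12; 11; 15; 3; 7; 2; 14; 10; 6; 9; 13; 1; 5];
  [:: 0; 12; 8; 4; 11; 7; 3; 15; 10; 6; 2; 14; 1; 5; 9; 13];
  [:: 0; 5; 8; 13; 1; 6; 9; 14; 10; 7; 2; 15; 11; 4; 3; 12];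
  [:: 0; 4; 8; 5; 9; 13; 1; 6; 2; 14; 10; 7; 11; 15; 3; 12];
  [:: 0; 5; 1; 14; 9; 6; 10; 15; 2; 7; 3; 4; 11; 12; 8; 13];
  [:: 0; 12; 11; 7; 2; 14; 9; 6; 10; 15; 3; 4; 8; 5; 1; 13];
  [:: 0; 4; 11; 15; 10; 6; 1; 14; 2; 7; 3; 12; 8; 13; 9; 5];
  [:: 0; 4; 3; 15; 2; 14; 10; 7; 11; 12; 8; 13; 9; 6; 1; 5];
  [:: 0; 12; 3; 7; 10; 6; 2; 15; 11; 4; 8; 5; 1; 14; 9; 13];
  [:: 0; 12; 11; 4; 3; 15; 2; 7; 10; 14; 1; 6; 9; 5; 8; 13];
  [:: 0; 4; 11; 12; 3; 7; 10; 15; 2; 6; 9; 14; 1; 13; 8; 5];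
  [:: 0; 4; 8; 12; 3; 7; 11; 15; 10; 14; 2; 6; 9; 5; 1; 13];
  [:: 0; 5; 9; 13; 1; 14; 10; 6; 2; 7; 11; 15; 3; 4; 8; 12];
  [:: 0; 5; 1; 6; 9; 14; 2; 7; 10; 15; 11; 4; 3; 12; 8; 13];
  [:: 0; 4; 8; 13; 9; 5; 1; 14; 10; 6; 2; 15; 3; 7; 11; 12];
  [:: 0; 5; 8; 4; 3; 12; 11; 7; 2; 15; 10; 6; 1; 14; 9; 13];
  [:: 0; 4; 11; 15; 3; 7; 10; 14; 2; 6; 9; 13; 1; 5; 8; 12];
  [:: 0; 4; 3; 15; 10; 7; 11; 12; 8; 13; 1; 6; 2; 14; 9; 5];
  [:: 0; 12; 3; 7; 2; 15; 11; 4; 8; 5; 9; 14; 10; 6; 1; 13];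
  [:: 0; 4; 8; 12; 3; 7; 11; 15; 10; 6; 2; 14; 9; 13; 1; 5];
  [:: 0; 12; 8; 4; 3; 15; 11; 7; 2; 14; 10; 6; 1; 5; 9; 13];
  [:: 0; 5; 8; 13; 9; 6; 1; 14; 2; 15; 10; 7; 3; 4; 11; 12];
  [:: 0; 4; 11; 12; 3; 15; 2; 7; 10; 6; 9; 14; 1; 5; 8; 13];
  [:: 0; 5; 9; 14; 1; 6; 2; 7; 10; 15; 11; 12; 3; 4; 8; 13];
  [:: 0; 5; 8; 12; 3; 4; 11; 7; 2; 15; 10; 14; 9; 6; 1; 13];
  [:: 0; 4; 11; 15; 3; 12; 8; 13; 9; 6; 2; 7; 10; 14; 1; 5];
  [:: 0; 12; 11; 7; 3; 4; 8; 5; 1; 14; 10; 15; 2; 6; 9; 13];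
  [:: 0; 4; 8; 13; 1; 5; 9; 14; 2; 6; 10; 7; 3; 15; 11; 12];
  [:: 0; 4; 11; 7; 3; 15; 2; 14; 10; 6; 1; 13; 9; 5; 8; 12];
  [:: 0; 12; 3; 7; 10; 15; 11; 4; 8; 5; 9; 14; 2; 6; 1; 13];
  [:: 0; 4; 3; 15; 2; 7; 11; 12; 8; 13; 1; 6; 10; 14; 9; 5];
  [:: 0; 5; 1; 6; 9; 14; 10; 15; 2; 7; 3; 12; 11; 4; 8; 13];
  [:: 0; 5; 8; 12; 11; 4; 3; 15; 10; 7; 2; 6; 1; 14; 9; 13];
  [:: 0; 4; 3; 15; 2; 14; 1; 13; 9; 6; 10; 7; 11; 12; 8; 5];
  [:: 0; 12; 3; 7; 10; 6; 9; 5; 1; 14; 2; 15; 11; 4; 8; 13];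
  [:: 0; 4; 11; 15; 2; 6; 1; 14; 10; 7; 3; 12; 8; 5; 9; 13];
  [:: 0; 5; 1; 13; 8; 4; 3; 15; 2; 6; 9; 14; 10; 7; 11; 12];
  [:: 0; 4; 8; 13; 1; 14; 2; 7; 11; 12; 3; 15; 10; 6; 9; 5];
  [:: 0; 4; 8; 5; 1; 13; 9; 14; 10; 6; 2; 7; 11; 15; 3; 12];
  [:: 0; 5; 9; 13; 1; 6; 2; 14; 10; 15; 11; 7; 3; 4; 8; 12];
  [:: 0; 12; 3; 4; 11; 7; 10; 15; 2; 6; 9; 14; 1; 5; 8; 13];
  [:: 0; 12; 8; 5; 9; 6; 10; 15; 11; 4; 3; 7; 2; 14; 1; 13];
  [:: 0; 4; 8; 5; 1; 6; 10; 7; 3; 12; 11; 15; 2; 14; 9; 13];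
  [:: 0; 4; 3; 15; 11; 7; 10; 6; 2; 14; 1; 5; 9; 13; 8; 12];
  [:: 0; 12; 11; 15; 2; 14; 10; 7; 3; 4; 8; 5; 9; 6; 1; 13];
  [:: 0; 4; 11; 7; 2; 6; 1; 5; 9; 14; 10; 15; 3; 12; 8; 13];
  [:: 0; 5; 8; 4; 11; 15; 10; 14; 1; 13; 9; 6; 2; 7; 3; 12];
  [:: 0; 4; 3; 12; 11; 15; 2; 7; 10; 6; 1; 14; 9; 13; 8; 5];
  [:: 0; 4; 11; 7; 3; 12; 8; 13; 1; 6; 10; 15; 2; 14; 9; 5];
  [:: 0; 4; 3; 15; 10; 6; 2; 7; 11; 12; 8; 5; 9; 14; 1; 13];
  [:: 0; 5; 1; 6; 2; 15; 3; 4; 11; 7; 10; 14; 9; 13; 8; 12];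
  [:: 0; 12; 3; 15; 11; 4; 8; 5; 9; 6; 10; 7; 2; 14; 1; 13];
  [:: 0; 4; 11; 7; 2; 15; 3; 12; 8; 5; 1; 14; 10; 6; 9; 13];
  [:: 0; 4; 8; 13; 9; 5; 1; 6; 2; 14; 10; 15; 11; 7; 3; 12];
  [:: 0; 4; 8; 12; 11; 7; 3; 15; 2; 14; 10; 6; 9; 5; 1; 13];
  [:: 0; 4; 11; 15; 10; 14; 2; 7; 3; 12; 8; 13; 1; 6; 9; 5];
  [:: 0; 5; 1; 14; 2; 6; 9; 13; 8; 4; 3; 7; 10; 15; 11; 12];
  [:: 0; 12; 8; 4; 11; 15; 3; 7; 2; 6; 10; 14; 9; 5; 1; 13];
  [:: 0; 5; 8; 4; 3; 7; 10; 14; 9; 13; 1; 6; 2; 15; 11; 12];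
  [:: 0; 5; 9; 6; 1; 14; 2; 15; 10; 7; 11; 4; 3; 12; 8; 13];
  [:: 0; 4; 8; 5; 9; 14; 10; 7; 11; 12; 3; 15; 2; 6; 1; 13];
  [:: 0; 4; 11; 7; 10; 6; 2; 15; 3; 12; 8; 13; 1; 14; 9; 5];
  [:: 0; 5; 9; 14; 2; 7; 10; 6; 1; 13; 8; 4; 3; 15; 11; 12];
  [:: 0; 4; 3; 15; 10; 14; 1; 5; 8; 13; 9; 6; 2; 7; 11; 12];
  [:: 0; 4; 3; 7; 11; 12; 8; 5; 9; 6; 10; 15; 2; 14; 1; 13];
  [:: 0; 5; 1; 14; 10; 6; 9; 13; 8; 4; 3; 7; 2; 15; 11; 12];
  [:: 0; 5; 9; 14; 2; 15; 11; 7; 10; 6; 1; 13; 8; 4; 3; 12];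
  [:: 0; 4; 11; 12; 8; 13; 9; 6; 10; 15; 3; 7; 2; 14; 1; 5];
  [:: 0; 4; 3; 15; 11; 12; 8; 5; 1; 6; 2; 7; 10; 14; 9; 13];
  [:: 0; 5; 9; 14; 2; 15; 11; 4; 3; 7; 10; 6; 1; 13; 8; 12];
  [:: 0; 5; 9; 13; 8; 4; 3; 15; 10; 14; 1; 6; 2; 7; 11; 12];
  [:: 0; 4; 11; 7; 2; 14; 9; 13; 1; 6; 10; 15; 3; 12; 8; 5];
  [:: 0; 5; 9; 14; 2; 7; 3; 12; 8; 4; 11; 15; 10; 6; 1; 13];
  [:: 0; 4; 11; 15; 2; 14; 9; 6; 10; 7; 3; 12; 8; 5; 1; 13];
  [:: 0; 5; 1; 6; 2; 15; 10; 14; 9; 13; 8; 4; 11; 7; 3; 12];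
  [:: 0; 12; 3; 15; 10; 14; 2; 7; 11; 4; 8; 5; 1; 6; 9; 13];
  [:: 0; 12; 11; 15; 10; 6; 1; 5; 9; 14; 2; 7; 3; 4; 8; 13];
  [:: 0; 12; 11; 4; 8; 5; 1; 14; 10; 7; 3; 15; 2; 6; 9; 13];
  [:: 0; 4; 3; 15; 2; 6; 9; 5; 1; 14; 10; 7; 11; 12; 8; 13];
  [:: 0; 4; 8; 12; 11; 15; 3; 7; 10; 6; 2; 14; 1; 13; 9; 5];
  [:: 0; 4; 8; 13; 9; 6; 2; 7; 3; 12; 11; 15; 10; 14; 1; 5];
  [:: 0; 5; 1; 14; 9; 13; 8; 4; 3; 7; 2; 6; 10; 15; 11; 12];
  [:: 0; 4; 11; 15; 2; 6; 1; 13; 8; 5; 9; 14; 10; 7; 3; 12];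
  [:: 0; 12; 8; 5; 1; 14; 10; 15; 3; 4; 11; 7; 2; 6; 9; 13];
  [:: 0; 12; 3; 15; 2; 14; 1; 6; 10; 7; 11; 4; 8; 5; 9; 13];
  [:: 0; 5; 1; 14; 2; 7; 11; 12; 8; 4; 3; 15; 10; 6; 9; 13];
  [:: 0; 4; 11; 7; 10; 15; 3; 12; 8; 5; 1; 14; 2; 6; 9; 13];
  [:: 0; 4; 3; 12; 8; 5; 9; 14; 10; 15; 11; 7; 2; 6; 1; 13];
  [:: 0; 4; 3; 7; 2; 6; 9; 14; 10; 15; 11; 12; 8; 13; 1; 5];
  [:: 0; 5; 8; 4; 3; 12; 11; 15; 2; 7; 10; 6; 9; 14; 1; 13];
  [:: 0; 4; 3; 12; 11; 7; 2; 15; 10; 14; 1; 6; 9; 13; 8; 5];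
  [:: 0; 4; 8; 5; 1; 13; 9; 6; 2; 14; 10; 15; 3; 7; 11; 12];
  [:: 0; 4; 3; 12; 8; 13; 1; 14; 10; 7; 11; 15; 2; 6; 9; 5];
  [:: 0; 5; 8; 13; 1; 6; 9; 14; 2; 7; 10; 15; 3; 4; 11; 12];
  [:: 0; 4; 8; 13; 1; 5; 9; 6; 10; 14; 2; 15; 11; 7; 3; 12];
  [:: 0; 12; 3; 4; 8; 5; 1; 6; 10; 15; 11; 7; 2; 14; 9; 13];
  [:: 0; 12; 3; 4; 11; 7; 2; 15; 10; 6; 1; 14; 9; 5; 8; 13];
  [:: 0; 4; 3; 12; 11; 7; 10; 15; 2; 14; 9; 6; 1; 5; 8; 13];
  [:: 0; 4; 8; 12; 3; 15; 11; 7; 2; 6; 10; 14; 1; 5; 9; 13];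
  [:: 0; 4; 3; 7; 2; 14; 1; 6; 10; 15; 11; 12; 8; 5; 9; 13];
  [:: 0; 12; 3; 15; 2; 6; 9; 14; 10; 7; 11; 4; 8; 5; 1; 13];
  [:: 0; 4; 11; 15; 3; 7; 2; 14; 10; 6; 1; 5; 9; 13; 8; 12];
  [:: 0; 5; 1; 13; 9; 6; 10; 14; 2; 15; 3; 7; 11; 4; 8; 12];
  [:: 0; 5; 9; 14; 1; 6; 10; 7; 2; 15; 3; 12; 11; 4; 8; 13];
  [:: 0; 4; 3; 15; 2; 14; 1; 5; 8; 13; 9; 6; 10; 7; 11; 12];
  [:: 0; 4; 11; 12; 3; 15; 10; 7; 2; 6; 9; 14; 1; 5; 8; 13];
  [:: 0; 12; 8; 4; 3; 15; 11; 7; 10; 14; 2; 6; 9; 5; 1; 13];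
  [:: 0; 5; 9; 6; 2; 14; 1; 13; 8; 4; 3; 7; 10; 15; 11; 12];
  [:: 0; 4; 3; 7; 11; 15; 10; 6; 2; 14; 1; 13; 9; 5; 8; 12];
  [:: 0; 4; 11; 15; 2; 7; 3; 12; 8; 13; 1; 14; 10; 6; 9; 5];
  [:: 0; 4; 3; 7; 2; 15; 11; 12; 8; 5; 1; 6; 10; 14; 9; 13];
  [:: 0; 4; 3; 7; 10; 15; 11; 12; 8; 5; 1; 6; 2; 14; 9; 13];
  [:: 0; 4; 11; 12; 8; 5; 1; 6; 2; 7; 3; 15; 10; 14; 9; 13];
  [:: 0; 4; 3; 7; 10; 14; 2; 15; 11; 12; 8; 5; 1; 6; 9; 13];
  [:: 0; 4; 11; 12; 8; 5; 9; 6; 2; 7; 3; 15; 10; 14; 1; 13];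
  [:: 0; 5; 1; 6; 2; 7; 3; 4; 8; 12; 11; 15; 10; 14; 9; 13];
  [:: 0; 5; 1; 6; 9; 13; 8; 4; 3; 7; 2; 14; 10; 15; 11; 12];
  [:: 0; 5; 1; 6; 10; 7; 3; 4; 8; 12; 11; 15; 2; 14; 9; 13];
  [:: 0; 5; 8; 4; 3; 12; 11; 7; 10; 15; 2; 6; 1; 14; 9; 13];
  [:: 0; 4; 3; 7; 2; 14; 9; 6; 10; 15; 11; 12; 8; 13; 1; 5];
  [:: 0; 4; 8; 5; 9; 13; 1; 6; 2; 14; 10; 7; 3; 15; 11; 12];
  [:: 0; 4; 11; 12; 3; 7; 2; 15; 10; 6; 1; 14; 9; 5; 8; 13]].
Definition eidx u v := index (ekey u v) EK.
Definition o0 : 'I_4 := @Ordinal 4 0 isT.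
Definition o1 : 'I_4 := @Ordinal 4 1 isT.
Definition o2 : 'I_4 := @Ordinal 4 2 isT.
Definition o3 : 'I_4 := @Ordinal 4 3 isT.
Definition oo (n : nat) : 'I_4 := match n with 0 => o0 | 1 => o1 | 2 => o2 | _ => o3 end.
Definition dec (n : nat) : V := (oo (n %/ 4), oo (n %% 4)).
Definition VL : seq V := [seq dec n | n <- iota 0 16].
Definition cycV := map (map dec) cycN.
Definition cE (c : seq V) := [seq eidx x (next c x) | x <- c].
Definition bvof c := mkseq (fun e => e \in cE c) 32.
Definition adjS (s : seq nat) u v := if bh2 u v then eidx u v \notin s else false.
Definition mindeg_ok s := all (fun x => 2 <= count (adjS s x) VL) VL.
Definition avoid (x : nat) (bv : seq bool) := ~~ nth false bv x.
Definition covered (s : seq nat) cs :=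
  all (fun e => (e \in s) || has (fun bv => nth false bv e) cs) (iota 0 32).
Definition checkT s :=
  covered s (filter (fun bv => all (fun x => avoid x bv) s) (map bvof cycV)) || ~~ mindeg_ok s.
Definition check_all :=
 let BV := map bvof cycV in
 all (fun a => let ca := filter (avoid a) BV in
   all (fun b => let cb := filter (avoid b) ca in
     all (fun c => if covered [::a;b;c] (filter (avoid c) cb) then true else ~~ mindeg_ok [::a;b;c])
       (iota 0 32)) (iota 0 32)) (iota 0 32).

Lemma VL_all (x : V) : x \in VL.
Proof.
case: x => [[a Ha] [b Hb]].
by do 4?[case: a Ha => [|a] Ha]; do 4?[case: b Hb => [|b] Hb].
Qed.

Lemma VL_uniq : uniq VL.
Proof. by vm_compute. Qed.

Lemma card_count (p : pred V) : #|[set w | p w]| = count p VL.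
Proof.
rewrite -size_filter.
have U : uniq (filter p VL) by rewrite filter_uniq // VL_uniq.
rewrite -(card_uniqP U).
apply: eq_card => w; by rewrite inE mem_filter VL_all andbT.
Qed.

Lemma allVL (P : pred V) : all P VL -> forall x, P x.
Proof. by move=> /allP H x; apply: H; apply: VL_all. Qed.

Lemma bh2_facts_b : all (fun u => all (fun v => bh2 u v ==> [&& bh2 v u, u != v & eidx u v < 32]) VL) VL.
Proof. by vm_compute. Qed.

Lemma bh2_facts u v : bh2 u v -> [/\ bh2 v u, u != v & eidx u v < 32].
Proof.
move=> H; have /allP Hv := allVL bh2_facts_b u; have := Hv v (VL_all v).
by rewrite H => /and3P[].
Qed.

Lemma eidx_inj_b : all (fun u => all (fun v => bh2 u v ==> all (fun x => all (fun y =>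
   bh2 x y ==> (eidx u v == eidx x y) ==> ((x == u) && (y == v) || (x == v) && (y == u))) VL) VL) VL) VL.
Proof. by vm_compute. Qed.

Lemma eidx_inj u v x y : bh2 u v -> bh2 x y -> eidx u v = eidx x y ->
  (x = u /\ y = v) \/ (x = v /\ y = u).
Proof.
move=> H1 H2 E.
have /allP Hv := allVL eidx_inj_b u; have := Hv v (VL_all v); rewrite H1 implyTb.
move=> /allP Hx; have /allP Hy := Hx x (VL_all x); have := Hy y (VL_all y).
rewrite H2 E eqxx !implyTb.
by case/orP => /andP[/eqP -> /eqP ->]; [left|right].
Qed.

Lemma eidxC u v : eidx u v = eidx v u.
Proof. by rewrite /eidx /ekey minnC maxnC. Qed.

Lemma ham_ok_b : all (fun cv => [&& uniq cv, size cv == 16 & cycle bh2 cv]) cycV.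
Proof. by vm_compute. Qed.

Lemma checkT_nil : checkT [::].
Proof. by vm_compute. Qed.

Lemma check_all_true : check_all = true.
Proof. vm_compute. reflexivity. Qed.

Lemma check_triple a b c : a < 32 -> b < 32 -> c < 32 -> checkT [:: a; b; c].
Proof.
move=> Ha Hb Hc; have := check_all_true; rewrite /check_all.
move=> /allP/(_ a); rewrite mem_iota Ha => /(_ isT).
move=> /allP/(_ b); rewrite mem_iota Hb => /(_ isT).
move=> /allP/(_ c); rewrite mem_iota Hc => /(_ isT).
rewrite /checkT -!filter_predI.
set f1 := filter _ _; set f2 := filter _ _.
have -> : f1 = f2.
  by apply: eq_filter => bv /=; rewrite andbT; do 3 case: (avoid _ bv).
by case: covered.
Qed.

Lemma set2_eq (x y p q : V) : x != y -> [set x; y] = [set p; q] ->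
  (p = x /\ q = y) \/ (p = y /\ q = x).
Proof.
move=> nxy E.
have hx : x \in [set p; q] by rewrite -E set21.
have hy : y \in [set p; q] by rewrite -E set22.
have hp : p \in [set x; y] by rewrite E set21.
have hq : q \in [set x; y] by rewrite E set22.
rewrite !inE in hx hy hp hq.
case/orP: hx => /eqP hx; case/orP: hy => /eqP hy; subst.
- by rewrite eqxx in nxy.
- by left.
- by right.
- by rewrite eqxx in nxy.
Qed.

Lemma finish (r : rel V) (w : seq V) u v : uniq w -> size w = 16 ->
  (forall z, z \in w -> r z (next w z)) -> u \in w -> next w u = v ->
  exists t, ham_cycle r (u :: v :: t).
Proof.
move=> Uw Sw Hn Hu Hv.
case: (rot_to Hu) => i p Hrot.
have Up : uniq (u :: p) by rewrite -Hrot rot_uniq.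
have Sp : size (u :: p) = 16 by rewrite -Hrot size_rot.
have Np : next (u :: p) =1 next w by move=> z; rewrite -Hrot next_rot.
case: p Hrot Up Sp Np => [|y t] // Hrot Up Sp Np.
have Ey : y = v by rewrite -Hv -Np /= eqxx.
subst y; exists t; split => //.
  by rewrite Sp card_prod !card_ord.
apply: cycle_from_next => // z Hz; rewrite Np; apply: Hn.
by rewrite -(mem_rot i) Hrot.
Qed.

Lemma sound s (r : rel V) : (forall x y, r x y = adjS s x y) -> checkT s ->
  min_deg_ge r 2 -> forall u v, r u v -> exists t, ham_cycle r (u :: v :: t).
Proof.
move=> Hr Hc Hdeg u v Huv.
have Hmd : mindeg_ok s.
  apply/allP => x _; rewrite -card_count.
  have -> : [set w | adjS s x w] = [set w | r x w] by apply/setP => w; rewrite !inE Hr.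
  exact: Hdeg.
move: Hc; rewrite /checkT Hmd orbF => Hcov.
have Hsym : forall x y, r x y -> r y x.
  move=> x y; rewrite !Hr /adjS; case Hb: (bh2 x y) => // He.
  by have [Hb' _ _] := bh2_facts Hb; rewrite Hb' eidxC.
have := Huv; rewrite Hr /adjS; case Hb: (bh2 u v) => // Hns.
have [_ _ Hlt] := bh2_facts Hb.
move/allP: Hcov => /(_ (eidx u v)); rewrite mem_iota add0n leq0n Hlt (negbTE Hns) orFb => /(_ isT) /hasP [bv].
rewrite mem_filter => /andP[Hav /mapP [cv Hcv Ebv]] Hbv; subst bv.
rewrite /bvof nth_mkseq // in Hbv.
have /and3P [Uc /eqP Sc Cc] := allP ham_ok_b cv Hcv.
have Hn : forall z, z \in cv -> r z (next cv z).
  move=> z Hz; rewrite Hr /adjS (next_cycle Cc Hz); apply/negP => Hin.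
  have Hin' : eidx z (next cv z) \in cE cv := map_f (fun x => eidx x (next cv x)) Hz.
  have [_ _ Hl] := bh2_facts (next_cycle Cc Hz).
  have := allP Hav _ Hin; rewrite /avoid /bvof (nth_mkseq _ _ Hl) Hin'.
  by [].
move/mapP: Hbv => [z Hz Ez].
have Bz := next_cycle Cc Hz.
case: (eidx_inj Hb Bz Ez) => [[Ez1 Ez2] | [Ez1 Ez2]].
  by subst z; apply: (finish Uc Sc Hn).
apply: (@finish r (rev cv)); rewrite ?rev_uniq ?size_rev //.
- move=> x; rewrite mem_rev => Hx; rewrite next_rev //; apply: Hsym.
  have := Hn _ (etrans (mem_prev cv x) Hx); by rewrite next_prev.
- by rewrite mem_rev -Ez2 mem_next.
- by rewrite next_rev // -Ez2 prev_next.
Qed.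

Theorem lemma8 (F : {set {set V}}) :
  (forall e, e \in F -> is_edge e) ->
  #|F| <= 3 ->
  min_deg_ge (adjF F) 2 ->
  forall u v : V, adjF F u v ->
  exists t : seq V, ham_cycle (adjF F) (u :: v :: t).
Proof.
move=> HF HF3 Hdeg u v Huv.
pose pk (e : {set V}) := [pick p : V * V | bh2 p.1 p.2 && (e == [set p.1; p.2])].
pose kf e := if pk e is Some p then eidx p.1 p.2 else 0.
have Hkf : forall e, e \in F -> exists x y, [/\ bh2 x y, e = [set x; y] & kf e = eidx x y].
  move=> e He; rewrite /kf /pk; case: pickP => [[x y] /= /andP[Hb /eqP ->] | Hn].
    by exists x, y.
  move: (HF e He) => /existsP [x /existsP [y /andP [Hb He']]].
  by have := Hn (x, y); rewrite /= Hb He'.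
pose s := map kf (enum F).
have memF : forall x y, bh2 x y -> ([set x; y] \in F) = (eidx x y \in s).
  move=> x y Hb; apply/idP/idP => [H | /mapP [e]].
    have [x' [y' [Hb' E' K']]] := Hkf _ H.
    apply/mapP; exists [set x; y]; first by rewrite mem_enum.
    rewrite K'; have [_ Hxy _] := bh2_facts Hb.
    case: (set2_eq Hxy E') => [[-> ->]|[-> ->]]; [exact: erefl | exact: eidxC].
  rewrite mem_enum => He E.
  have [x' [y' [Hb' E' K']]] := Hkf _ He; rewrite K' in E.
  case: (eidx_inj Hb Hb' E) => [[Ex Ey]|[Ex Ey]]; subst x' y'.
    by rewrite -E'.
  by rewrite setUC -E'.
have Hs : size s <= 3 by rewrite size_map -cardE.
have Hslt : all (fun a => a < 32) s.
  apply/allP => a /mapP [e He ->]; rewrite mem_enum in He.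
  by have [x [y [Hb _ ->]]] := Hkf _ He; case: (bh2_facts Hb).
have Hadj : forall x y, adjF F x y = adjS s x y.
  by move=> x y; rewrite /adjF /adjS; case Hb: (bh2 x y) => //; rewrite memF.
clearbody s; clear memF.
suff [s' [Hc Hm]] : exists s', checkT s' /\ s' =i s.
  apply: (sound (s := s')) Hc Hdeg u v Huv => x y.
  by rewrite Hadj /adjS; case: bh2 => //; rewrite Hm.
move: Hs Hslt; case: s {Hadj} => [|a [|b [|c [|d l]]]] //= _.
- by move=> _; exists [::]; split => //; exact: checkT_nil.
- move=> /andP[Ha _]; exists [:: a; a; a]; split; first exact: check_triple.
  by move=> x; rewrite !inE; case: (x == a).
- move=> /and3P[Ha Hb _]; exists [:: a; a; b]; split; first exact: check_triple.
  by move=> x; rewrite !inE; case: (x == a).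
- move=> /and4P[Ha Hb Hc _]; exists [:: a; b; c]; split; first exact: check_triple.
  by move=> x.
Qed.
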